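(* Let $\mathcal H=\{H_1,\dots,H_n\}$ be oriented affine hyperplanes in $\mathbb R^d$ such that $(\mathcal H,\mathbb R^d)$ has generic intersections, i.e. for every $\sigma\subseteq[n]$ with $\bigcap_{i\in\sigma}H_i\neq\emptyset$ one has $\dim\bigcap_{i\in\sigma}H_i=d-|\sigma|$. Then $\Gamma(\mathrm{code}(\mathcal H,\mathbb R^d))$ is shellable.
   Context: $H_i=\{x:w_i\cdot x-h_i=0\}$ with $w_i\ne0$ and $H_i^+=\{w_i\cdot x-h_i>0\}$. $\mathrm{code}(\mathcal H,\mathbb R^d)$ is the set of $\sigma\subseteq[n]$ such that $\bigl(\bigcap_{i\in\sigma}H_i^+\bigr)\setminus\bigcup_{j\notin\sigma}H_j^+\neq\emptyset$ (the empty intersection being $\mathbb R^d$). The polar complex $\Gamma(\mathcal C)$ is the simplicial complex on $[n]\sqcup\{\bar1,\dots,\bar n\}$ consisting of all subsets of the sets $\sigma\sqcup\{\bar i:i\in[n]\setminus\sigma\}$, $\sigma\in\mathcal C$; it is pure of dimension $n-1$. A pure $k$-dimensional complex is shellable if its facets admit an ordering $F_1,\dots,F_t$ such that for each $i>1$, the complex of all subsets of $F_i$ intersected with the complex of all subsets of $F_1,\dots,F_{i-1}$ is pure of dimension $k-1$. *)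

(* Defs.v *)
From mathcomp Require Import all_boot all_order all_algebra.
From mathcomp Require Import boolp reals.
Set Implicit Arguments. Unset Strict Implicit. Unset Printing Implicit Defensive.
Import Order.TTheory GRing.Theory Num.Theory.
Local Open Scope ring_scope.

Section Defs.
Variable R : realType.
Variable d : nat.

Definition dotp (u v : 'rV[R]_d) : R := \sum_(j < d) u 0 j * v 0 j.

Definition diff_of (S : 'rV[R]_d -> Prop) (v : 'rV[R]_d) : Prop :=
  exists x y, S x /\ S y /\ v = x - y.

(* The (affine) dimension of S is k: the direction space
   span{x - y : x, y in S} has dimension k, i.e. k is the maximal size of a
   linearly independent family of differences of points of S. *)
Definition aff_dim_is (S : 'rV[R]_d -> Prop) (k : nat) : Prop :=
  (exists s : seq 'rV[R]_d, size s = k /\ free s /\ forall v, v \in s -> diff_of S v)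
  /\ (forall s : seq 'rV[R]_d, free s -> (forall v, v \in s -> diff_of S v) ->
        (size s <= k)%N).

Variable n : nat.
Variables (w : 'I_n -> 'rV[R]_d) (h : 'I_n -> R).

Definition hyp_cap (sigma : {set 'I_n}) (x : 'rV[R]_d) : Prop :=
  forall i, i \in sigma -> dotp (w i) x = h i.

Definition generic_intersections : Prop :=
  forall sigma : {set 'I_n}, (exists x, hyp_cap sigma x) ->
    (#|sigma| <= d)%N /\ aff_dim_is (hyp_cap sigma) (d - #|sigma|).

Definition in_code (sigma : {set 'I_n}) : Prop :=
  exists x : 'rV[R]_d, forall i, (i \in sigma) <-> (0 < dotp (w i) x - h i).

Definition code : {set {set 'I_n}} := [set sigma | `[< in_code sigma >]].

End Defs.

(* Polar complex: vertex set [n] + {1bar..nbar} is 'I_n + 'I_n,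
   inl i = i, inr i = ibar. *)
Definition polar_facet (n : nat) (sigma : {set 'I_n}) : {set 'I_n + 'I_n} :=
  [set inl i | i in sigma] :|: [set inr i | i in ~: sigma].

Definition polar_complex (n : nat) (C : {set {set 'I_n}}) : {set {set 'I_n + 'I_n}} :=
  [set G : {set 'I_n + 'I_n} | [exists sigma in C, G \subset polar_facet sigma]].

Section Complexes.
Variable V : finType.

Definition facets (K : {set {set V}}) : {set {set V}} :=
  [set F in K | [forall G in K, (F \subset G) ==> (G == F)]].

(* K is pure, all facets having cardinality c (i.e. pure of dimension c-1):
   every face lies in a face of cardinality c, and no face is larger. *)
Definition pure_card (K : {set {set V}}) (c : nat) : Prop :=
  forall G, G \in K -> (#|G| <= c)%N /\ exists2 F, F \in K & (G \subset F) && (#|F| == c).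

(* the complex of all subsets of F_i that are subsets of some F_j, j < i
   (here indices start at 0) *)
Definition shell_int (s : seq {set V}) (i : nat) : {set {set V}} :=
  [set G : {set V} | (G \subset nth set0 s i) && has (fun F : {set V} => G \subset F) (take i s)].

Definition shellable (K : {set {set V}}) : Prop :=
  exists c : nat, pure_card K c /\
    exists s : seq {set V},
      [/\ uniq s, (forall F, (F \in s) = (F \in facets K)) &
          forall i, (0 < i < size s)%N -> pure_card (shell_int s i) c.-1].

End Complexes.

(* Main.v *)
Require Import Defs.
From mathcomp Require Import all_boot all_order all_algebra.
From mathcomp Require Import boolp classical_sets reals topology normedtype matrix_normedtype derive.
From mathcomp Require Import ring lra zify.
From mathcomp Require Import seq fintype finset.
Set Implicit Arguments. Unset Strict Implicit. Unset Printing Implicit Defensive.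
Import Order.TTheory GRing.Theory Num.Theory.
Import numFieldTopology.Exports numFieldNormedType.Exports.
Local Open Scope ring_scope.

Section Anal.
Variable R : realType.
Variable d : nat.
Local Open Scope classical_set_scope.

Lemma cont_sum (r : seq 'I_d) (F : 'I_d -> 'rV[R]_d -> R) :
  (forall j, continuous (F j)) -> continuous (fun z => \sum_(j <- r) F j z).
Proof.
move=> hF; elim: r => [|a r IH].
  by under eq_fun do rewrite big_nil; exact: cst_continuous.
under eq_fun do rewrite big_cons.
by move=> x; apply: continuousD; [exact: hF | exact: IH].
Qed.

Lemma dotp_cont (u : 'rV[R]_d) : continuous (dotp u).
Proof.
rewrite /dotp; apply: cont_sum => j x.
apply: continuousM; first exact: cst_continuous.
exact: coord_continuous.
Qed.

Lemma dotpzz_cont : continuous (fun z : 'rV[R]_d => dotp z z).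
Proof.
rewrite /dotp; apply: cont_sum => j x.
by apply: continuousM; exact: coord_continuous.
Qed.

Lemma sq_le_dotp (z : 'rV[R]_d) j : z 0 j * z 0 j <= dotp z z.
Proof.
rewrite /dotp (bigD1 j) //= lerDl; apply: sumr_ge0 => i _.
by rewrite -expr2 sqr_ge0.
Qed.

Lemma min_exists n (g : 'I_n -> 'rV[R]_d -> R) (hg : forall i, continuous (g i))
  (z0 : 'rV[R]_d) (h0 : forall i, 0 <= g i z0) :
  exists x, (forall i, 0 <= g i x) /\
    forall z, (forall i, 0 <= g i z) -> dotp x x <= dotp z z.
Proof.
pose c := dotp z0 z0.
pose A := [set z : 'rV[R]_d | (forall i, 0 <= g i z) /\ dotp z z <= c].
have A0 : (A !=set0)%classic by exists z0; split => //.
have Acl : closed A.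
  have -> : A = (\bigcap_(i in classical_sets.setT) [set z | 0 <= g i z]) `&` [set z | dotp z z <= c].
    rewrite predeqE => z /=; split.
      by move=> [H1 H2]; split => // i _; exact: H1.
    by move=> [H1 H2]; split => // i; exact: H1.
  apply: closedI.
    apply: closed_bigI => i _.
    exact: (preimage_closed (fun x _ => hg i x) (@closed_ge R 0)).
  apply: (preimage_closed _ (@closed_le R c)) => x _; exact: dotpzz_cont.
have Abd : bounded_set A.
  exists (1 + c); split; first by rewrite num_real.
  move=> M HM z [_ Hz].
  rewrite /Num.Def.normr /= mx_normrE (bigmax_le _ _) //=.
    by rewrite (le_trans _ (ltW HM)) // addr_ge0 // (le_trans _ Hz) // /dotp sumr_ge0 // => i _; rewrite -expr2 sqr_ge0.
  move=> [i j] _ /=; rewrite (ord1 i).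
  have := sq_le_dotp z j.
  have : 0 <= z 0 j * z 0 j by rewrite -expr2 sqr_ge0.
  move: (z 0 j) => a a0 az.
  have [a1|a1] := leP 0 a.
    rewrite ger0_norm //; nra.
  rewrite ltr0_norm //; nra.
have Acp : compact A by apply: bounded_closed_compact.
have [x xA xmin] := EVT_min_rV A0 Acp (continuous_subspaceT dotpzz_cont).
move: xA; rewrite in_setE => -[xg xc].
exists x; split => // z zg.
have [zc|zc] := leP (dotp z z) c.
  by apply: xmin; rewrite in_setE; split.
exact: le_trans xc (ltW zc).
Qed.
End Anal.

Section Lin.
Variable R : realType.
Variable d : nat.

Lemma dotpDr (u a b : 'rV[R]_d) : dotp u (a + b) = dotp u a + dotp u b.
Proof. by rewrite /dotp -big_split /=; apply: eq_bigr => j _; rewrite mxE mulrDr. Qed.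
Lemma dotpDl (u a b : 'rV[R]_d) : dotp (a + b) u = dotp a u + dotp b u.
Proof. by rewrite /dotp -big_split /=; apply: eq_bigr => j _; rewrite mxE mulrDl. Qed.
Lemma dotpZr (u a : 'rV[R]_d) c : dotp u (c *: a) = c * dotp u a.
Proof. by rewrite /dotp mulr_sumr; apply: eq_bigr => j _; rewrite mxE mulrCA. Qed.
Lemma dotpZl (u a : 'rV[R]_d) c : dotp (c *: a) u = c * dotp a u.
Proof. by rewrite /dotp mulr_sumr; apply: eq_bigr => j _; rewrite mxE mulrA. Qed.
Lemma dotpNr (u a : 'rV[R]_d) : dotp u (- a) = - dotp u a.
Proof. by rewrite -scaleN1r dotpZr mulN1r. Qed.
Lemma dotpNl (u a : 'rV[R]_d) : dotp (- a) u = - dotp a u.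
Proof. by rewrite -scaleN1r dotpZl mulN1r. Qed.
Lemma dotpBr (u a b : 'rV[R]_d) : dotp u (a - b) = dotp u a - dotp u b.
Proof. by rewrite dotpDr dotpNr. Qed.
Lemma dotpBl (u a b : 'rV[R]_d) : dotp (a - b) u = dotp a u - dotp b u.
Proof. by rewrite dotpDl dotpNl. Qed.
Lemma dotpC (u a : 'rV[R]_d) : dotp u a = dotp a u.
Proof. by rewrite /dotp; apply: eq_bigr => j _; rewrite mulrC. Qed.
Lemma dotp0r (u : 'rV[R]_d) : dotp u 0 = 0.
Proof. by rewrite /dotp big1 // => j _; rewrite mxE mulr0. Qed.
Lemma dotp_sumr I (r : seq I) (P : pred I) (F : I -> 'rV[R]_d) u :
  dotp u (\sum_(i <- r | P i) F i) = \sum_(i <- r | P i) dotp u (F i).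
Proof.
rewrite /dotp exchange_big /=; apply: eq_bigr => j _.
by rewrite summxE mulr_sumr.
Qed.

Variable n : nat.
Variables (w : 'I_n -> 'rV[R]_d) (h : 'I_n -> R).

Lemma surj (A : {set 'I_n}) x : generic_intersections w h -> hyp_cap w h A x ->
  forall t : 'I_n -> R, exists u, forall g, g \in A -> dotp (w g) u = t g.
Proof.
move=> hgen xA t.
have [_ [_ Hle]] := hgen A (ex_intro _ x xA).
pose k := #|A|.
pose M : 'M[R]_(d, k) := \matrix_(j, l) w (enum_val l) 0 j.
have fE u l : (mulmxr M u) 0 l = dotp (w (enum_val l)) u.
  rewrite /= mxE /dotp; apply: eq_bigr => j _; by rewrite mxE mulrC.
pose F := linfun (@mulmxr R 1 d k M).
have kerP v : v \in lker F -> forall g, g \in A -> dotp (w g) v = 0.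
  rewrite memv_ker lfunE => /eqP Fv g gA.
  have := fE v (enum_rank_in gA g).
  by rewrite Fv enum_rankK_in // mxE => <-.
have dimker : (\dim (lker F) <= d - k)%N.
  have := Hle (vbasis (lker F)) (basis_free (vbasisP _)).
  rewrite size_tuple; apply => v /vbasis_mem vK.
  exists (x + v), x; split; last split.
  - by move=> g gA; rewrite dotpDr (kerP v vK g gA) addr0; exact: xA.
  - exact: xA.
  - by rewrite addrC addKr.
have full : limg F = fullv.
  apply/eqP; rewrite eqEdim subvf /=.
  have := limg_ker_dim F fullv.
  rewrite capfv !dimvf /dim /= !mul1n => E.
  have kd : (k <= d)%N by have [] := hgen A (ex_intro _ x xA).
  move: dimker E; move: (\dim (lker F)) (\dim (limg F)) => a b; lia.
have : (\row_l t (enum_val l)) \in limg F by rewrite full memvf.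
case/memv_imgP => u _ Eu.
exists u => g gA.
have := fE u (enum_rank_in gA g).
by rewrite -lfunE -Eu mxE enum_rankK_in // => <-.
Qed.
End Lin.

Section Comb.
Variable n : nat.
Implicit Types (sigma tau : {set 'I_n}).

Definition flip sigma g : {set 'I_n} := if g \in sigma then sigma :\ g else g |: sigma.

Lemma in_flip sigma g i : (i \in flip sigma g) = (if i == g then g \notin sigma else i \in sigma).
Proof.
rewrite /flip; case: (eqVneq i g) => [->|ig].
  by case: (g \in sigma) => /=; rewrite ?setD11 ?setU11 ?eqxx.
by case: (g \in sigma); rewrite ?in_setD1 ?in_setU1 ?(negbTE ig) ?eqxx /=.
Qed.

Lemma pf_inl sigma i : (inl i \in polar_facet sigma) = (i \in sigma).
Proof.
rewrite /polar_facet in_setU mem_imset; last by move=> a b [].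
case: (i \in sigma) => //=; apply/negP => /imsetP [j _] //.
Qed.

Lemma pf_inr sigma i : (inr i \in polar_facet sigma) = (i \notin sigma).
Proof.
rewrite /polar_facet in_setU (mem_imset (f := @inr 'I_n 'I_n)); last by move=> a b [].
rewrite in_setC; case: (i \in sigma) => /=; last by rewrite orbT.
rewrite orbF; apply/negbTE/negP => /imsetP [j _] //.
Qed.

Lemma pf_card sigma : #|polar_facet sigma| = n.
Proof.
rewrite /polar_facet cardsU !card_imset; try by move=> a b [].
have -> : [set inl i | i in sigma] :&: [set inr i | i in ~: sigma] = set0.
  apply/setP => v; rewrite !inE; apply/negP => /andP [/imsetP [a _ ->] /imsetP [b _]] //.
by rewrite cards0 subn0 cardsC card_ord.
Qed.

Lemma pf_inj : injective (@polar_facet n).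
Proof. by move=> a b E; apply/setP => i; rewrite -!pf_inl E. Qed.

Lemma pf_sub sigma tau : polar_facet sigma \subset polar_facet tau -> sigma = tau.
Proof.
move=> S; apply: pf_inj; apply/eqP; rewrite eqEcard S !pf_card leqnn //.
Qed.

Lemma shell_comb (C : {set {set 'I_n}}) (s : seq {set 'I_n}) :
  uniq s -> s =i C -> s != [::] ->
  (forall i, (i < size s)%N -> forall tau, tau \in take i s ->
     exists g, ((g \in nth set0 s i) != (g \in tau)) /\ flip (nth set0 s i) g \in take i s) ->
  shellable (polar_complex C).
Proof.
move=> us sC s0 Hsh.
have Kmem G : (G \in polar_complex C) = [exists sigma in C, G \subset polar_facet sigma].
  by rewrite inE.
have pfK sigma : sigma \in C -> polar_facet sigma \in polar_complex C.
  by move=> sC'; rewrite Kmem; apply/existsP; exists sigma; rewrite sC' subxx.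
exists n; split.
  move=> G; rewrite Kmem => /existsP [sigma /andP [sCm GS]]; split.
    by apply: leq_trans (subset_leq_card GS) _; rewrite pf_card.
  by exists (polar_facet sigma); [exact: pfK | rewrite GS pf_card eqxx].
exists (map (@polar_facet n) s); split.
- by rewrite map_inj_uniq //; exact: pf_inj.
- move=> F; apply/idP/idP.
    case/mapP => sigma ss ->.
    have sCm : sigma \in C by rewrite -sC.
    rewrite inE pfK //=; apply/forallP => G; apply/implyP => GK; apply/implyP => SG.
    move: GK; rewrite Kmem => /existsP [tau /andP [_ Gt]].
    have E := pf_sub (subset_trans SG Gt); subst tau.
    by rewrite eqEsubset Gt SG.
  rewrite inE => /andP [FK /forallP Fmax].
  move: FK; rewrite Kmem => /existsP [sigma /andP [sCm FS]].
  have := Fmax (polar_facet sigma); rewrite pfK // FS /= => /eqP <-.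
  by apply/mapP; exists sigma; rewrite ?sC.
- move=> i /andP [i0 ilt]; rewrite size_map in ilt.
  have nthE : nth set0 (map (@polar_facet n) s) i = polar_facet (nth set0 s i).
    by rewrite (nth_map set0).
  move=> G; rewrite inE nthE -map_take => /andP [GSi /hasP [F /mapP [tau tt ->] Gt]].
  have [g [gd fl]] := Hsh i ilt tau tt.
  set si := nth set0 s i in gd fl GSi.
  pose vg : 'I_n + 'I_n := if g \in si then inl g else inr g.
  have vgS : vg \in polar_facet si by rewrite /vg; case E: (g \in si); rewrite ?pf_inl ?pf_inr ?E.
  have vgt : vg \notin polar_facet tau.
    by rewrite /vg; case E: (g \in si); rewrite ?pf_inl ?pf_inr; move: gd; rewrite E; case: (g \in tau).
  have cF : #|polar_facet si :\ vg| = n.-1.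
    have := cardsD1 vg (polar_facet si); rewrite vgS pf_card.
    move: #|polar_facet si :\ vg| => k; lia.
  have GF : G \subset polar_facet si :\ vg.
    apply/subsetP => v vG; rewrite in_setD1 (subsetP GSi) // andbT.
    by apply/eqP => E; move: vgt; rewrite -E (subsetP Gt).
  split; first by rewrite -cF subset_leq_card.
  exists (polar_facet si :\ vg); last by rewrite GF cF eqxx.
  rewrite inE nthE; apply/andP; split; first exact: subD1set.
  rewrite -map_take; apply/hasP.
  exists (polar_facet (flip si g)); first by apply/mapP; exists (flip si g).
  apply/subsetP => v; rewrite in_setD1 => /andP [nv vS].
  case: v nv vS => k nv; rewrite ?pf_inl ?pf_inr in_flip => vS.
    case: (eqVneq k g) => [E|] //; subst k.
    by move: nv; rewrite /vg vS eqxx.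
  case: (eqVneq k g) => [E|] //; subst k.
  by move: nv; rewrite /vg (negbTE vS) eqxx.
Qed.
End Comb.

Section Geo.
Variable R : realType.
Variables d n : nat.
Variables (w : 'I_n -> 'rV[R]_d) (h : 'I_n -> R).

Lemma small_t (I : finType) (a b : I -> R) :
  (forall i, 0 < b i) -> exists t, 0 < t /\ forall i, t * a i < b i.
Proof.
move=> bp.
pose S := \sum_i `|a i| / b i.
have S0 : 0 <= S by apply: sumr_ge0 => i _; rewrite divr_ge0 // ltW.
exists (1 / (1 + S)); split; first by rewrite divr_gt0 // ltr_pwDl.
move=> i.
have xi : `|a i| / b i <= S.
  by rewrite /S (bigD1 i) //= lerDl sumr_ge0 // => j _; rewrite divr_ge0 // ltW.
have bi := bp i.
have ax : `|a i| = (`|a i| / b i) * b i by rewrite divfK // gt_eqF.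
move: xi ax; set x := `|a i| / b i => xi ax.
have x0 : 0 <= x by rewrite divr_ge0 // ltW.
have an := ler_norm (a i).
set t := 1 / (1 + S).
have tS : t * (1 + S) = 1 by rewrite /t mul1r mulVf // gt_eqF // ltr_pwDl.
have t0 : 0 < t by rewrite /t divr_gt0 // ltr_pwDl.
apply: (le_lt_trans (ler_wpM2l (ltW t0) an)).
rewrite ax mulrA.
have : t * x <= t * S by rewrite ler_wpM2l // ltW.
rewrite mulrDr mulr1 in tS.
move: (t * x) (t * S) tS => y z tS yz.
nra.
Qed.

Lemma pres_pos (t c e : R) : 0 <= t -> t * `|c| < e -> 0 < e + t * c.
Proof. move=> t0 H; have h1 := ler_norm c; have h2 := ler_norm (- c); rewrite normrN in h2; nra. Qed.
Lemma pres_neg (t c e : R) : 0 <= t -> t * `|c| < - e -> e + t * c < 0.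
Proof. move=> t0 H; have h1 := ler_norm c; have h2 := ler_norm (- c); rewrite normrN in h2; nra. Qed.

Definition Pc (sigma : {set 'I_n}) (z : 'rV[R]_d) :=
  forall i, if i \in sigma then h i <= dotp (w i) z else dotp (w i) z <= h i.

Lemma dotp_xtu (x u : 'rV[R]_d) t :
  dotp (x + t *: u) (x + t *: u) = dotp x x + t * (2 * dotp x u + t * dotp u u).
Proof.
rewrite !dotpDl !dotpDr !dotpZl !dotpZr (dotpC u x); ring.
Qed.

Lemma wxtu i (x u : 'rV[R]_d) t : dotp (w i) (x + t *: u) = dotp (w i) x + t * dotp (w i) u.
Proof. by rewrite dotpDr dotpZr. Qed.

Lemma descent rho x u : Pc rho x ->
  (forall i, dotp (w i) x = h i -> if i \in rho then 0 <= dotp (w i) u else dotp (w i) u <= 0) ->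
  dotp x u < 0 -> exists z, Pc rho z /\ dotp z z < dotp x x.
Proof.
move=> Px Hu xu.
pose a (o : option 'I_n) := if o is Some i then (if dotp (w i) x == h i then 0 else `|dotp (w i) u|) else dotp u u.
pose b (o : option 'I_n) := if o is Some i then (if dotp (w i) x == h i then 1 else `|dotp (w i) x - h i|) else - dotp x u.
have bp o : 0 < b o.
  case: o => [i|] /=; last by rewrite oppr_gt0.
  by case: eqP => // /eqP; rewrite -subr_eq0 normr_gt0.
have [t [t0 Ht]] := small_t a bp.
exists (x + t *: u); split; last first.
  rewrite dotp_xtu; have := Ht None => /= H; nra.
move=> i; rewrite wxtu.
have := Ht (Some i); have := Hu i; have := Px i; rewrite /a /b /=.
case: eqP => [-> _ Hi _|ne Pi _ Hi].
  case: (i \in rho) Hi => Hi; nra.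
case: (i \in rho) Pi => Pi.
  have gt : h i < dotp (w i) x by rewrite lt_neqAle Pi andbT; apply/eqP => E; apply: ne; rewrite E.
  rewrite (@ger0_norm _ (dotp (w i) x - h i)) in Hi; last by rewrite subr_ge0.
  have := pres_pos (ltW t0) Hi; lra.
have lt : dotp (w i) x < h i by rewrite lt_neqAle Pi andbT; apply/eqP.
rewrite (@ler0_norm _ (dotp (w i) x - h i)) in Hi; last by rewrite subr_le0 ltW.
have := pres_neg (ltW t0) Hi; lra.
Qed.

Lemma realize rho x u : Pc rho x ->
  (forall i, dotp (w i) x = h i -> if i \in rho then 0 < dotp (w i) u else dotp (w i) u < 0) ->
  in_code w h rho.
Proof.
move=> Px Hu.
pose a i := if dotp (w i) x == h i then 0 else `|dotp (w i) u|.
pose b i := if dotp (w i) x == h i then 1 else `|dotp (w i) x - h i|.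
have bp i : 0 < b i.
  by rewrite /b; case: eqP => // /eqP; rewrite -subr_eq0 normr_gt0.
have [t [t0 Ht]] := small_t a bp.
exists (x + t *: u) => i; rewrite wxtu.
have := Ht i; have := Hu i; have := Px i; rewrite /a /b /=.
case: eqP => [-> _ Hi _|ne Pi _ Hi].
  case: (i \in rho) Hi => Hi; split => //; nra.
case: (i \in rho) Pi => Pi.
  have gt : h i < dotp (w i) x by rewrite lt_neqAle Pi andbT; apply/eqP => E; apply: ne; rewrite E.
  rewrite (@ger0_norm _ (dotp (w i) x - h i)) in Hi; last by rewrite subr_ge0.
  have := pres_pos (ltW t0) Hi; split => //; lra.
have lt : dotp (w i) x < h i by rewrite lt_neqAle Pi andbT; apply/eqP.
rewrite (@ler0_norm _ (dotp (w i) x - h i)) in Hi; last by rewrite subr_le0 ltW.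
have := pres_neg (ltW t0) Hi; split => //; lra.
Qed.


Definition minpt sigma : 'rV[R]_d :=
  match pselect (exists x, Pc sigma x /\ forall z, Pc sigma z -> dotp x x <= dotp z z) with
  | left H => sval (cid H) | right _ => 0 end.

Lemma minptP sigma z0 : Pc sigma z0 ->
  Pc sigma (minpt sigma) /\ forall z, Pc sigma z -> dotp (minpt sigma) (minpt sigma) <= dotp z z.
Proof.
move=> P0; rewrite /minpt; case: pselect => [H|H]; first exact: (svalP (cid H)).
exfalso; apply: H.
pose g i z := if i \in sigma then dotp (w i) z - h i else h i - dotp (w i) z.
have gP i z : (0 <= g i z) = (if i \in sigma then h i <= dotp (w i) z else dotp (w i) z <= h i).
  by rewrite /g; case: (i \in sigma); rewrite subr_ge0.
have gc i : continuous (g i).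
  rewrite /g; case: (i \in sigma) => x.
    by apply: continuousB; [exact: dotp_cont | exact: cst_continuous].
  by apply: continuousB; [exact: cst_continuous | exact: dotp_cont].
have [x [Hx Hm]] := min_exists gc (z0 := z0) (fun i => etrans (gP i z0) (P0 i)).
exists x; split; first by move=> i; rewrite -gP.
by move=> z Pz; apply: Hm => i; rewrite gP.
Qed.

Definition kap sigma := dotp (minpt sigma) (minpt sigma).

Lemma code_Pc sigma : sigma \in code w h -> exists z, Pc sigma z.
Proof.
rewrite inE => /asboolP [z Hz]; exists z => i; have := Hz i.
case: (i \in sigma) => -[H1 H2].
  by have := H1 isT; rewrite subr_gt0 => /ltW.
by rewrite leNgt; apply/negP => lt; have := H2; rewrite subr_gt0 lt => /(_ isT).
Qed.

Lemma kap_le sigma z : Pc sigma z -> kap sigma <= dotp z z.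
Proof. by move=> Pz; have [_ ] := minptP Pz; apply. Qed.

End Geo.

Section Key.
Variable R : realType.
Variables d n : nat.
Variables (w : 'I_n -> 'rV[R]_d) (h : 'I_n -> R).
Hypothesis hgen : generic_intersections w h.

Lemma dotp_gt0 (v : 'rV[R]_d) : v != 0 -> 0 < dotp v v.
Proof.
move=> nv; rewrite lt_def; apply/andP; split; last by apply: sumr_ge0 => j _; rewrite -expr2 sqr_ge0.
apply: contra nv => /eqP /psumr_eq0P H.
apply/eqP/rowP => j; rewrite mxE.
have H2 : forall k : 'I_d, true -> 0 <= v 0 k * v 0 k by move=> k _; rewrite -expr2 sqr_ge0.
have := H H2 j isT; rewrite -expr2 => /eqP.
by rewrite sqrf_eq0 => /eqP.
Qed.

Definition Nk (sigma : {set 'I_n}) := (#|sigma| * #|{set 'I_n}| + enum_rank sigma)%N.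

Lemma Nk_card (a b : {set 'I_n}) : (Nk a < Nk b)%N -> (#|a| <= #|b|)%N.
Proof.
rewrite /Nk; have : (enum_rank a < #|{set 'I_n}|)%N := ltn_ord (enum_rank a); have : (enum_rank b < #|{set 'I_n}|)%N := ltn_ord (enum_rank b).
move: (nat_of_ord (enum_rank a)) (nat_of_ord (enum_rank b)) => ra rb hb ha H.
rewrite leqNgt; apply/negP => ab.
have : (#|b|.+1 * #|{set 'I_n}| <= #|a| * #|{set 'I_n}|)%N by rewrite leq_mul2r ab orbT.
rewrite mulSn; move: H; move: (#|b| * _)%N (#|a| * _)%N => x y; lia.
Qed.

Lemma Nk_lt (a b : {set 'I_n}) : (#|a| < #|b|)%N -> (Nk a < Nk b)%N.
Proof.
rewrite /Nk; have : (enum_rank a < #|{set 'I_n}|)%N := ltn_ord (enum_rank a); have : (enum_rank b < #|{set 'I_n}|)%N := ltn_ord (enum_rank b).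
move: (nat_of_ord (enum_rank a)) (nat_of_ord (enum_rank b)) => ra rb hb ha ab.
have : (#|a|.+1 * #|{set 'I_n}| <= #|b| * #|{set 'I_n}|)%N by rewrite leq_mul2r ab orbT.
rewrite mulSn; move: (#|b| * _)%N (#|a| * _)%N => x y; lia.
Qed.

Definition ltk (a b : {set 'I_n}) := (kap w h a < kap w h b) || ((kap w h a == kap w h b) && (Nk a < Nk b)%N).

Lemma key (sigma tau : {set 'I_n}) : sigma \in code w h -> tau \in code w h -> ltk tau sigma ->
  exists g, ((g \in sigma) != (g \in tau)) /\ flip sigma g \in code w h /\ ltk (flip sigma g) sigma.
Proof.
move=> sC tC lt.
have [z1 P1] := code_Pc sC; have [z2 P2] := code_Pc tC.
have [Px mx] := minptP P1; have [Py my] := minptP P2.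
have kx : kap w h sigma = dotp (minpt w h sigma) (minpt w h sigma) by [].
have ky : kap w h tau = dotp (minpt w h tau) (minpt w h tau) by [].
move: Px mx Py my kx ky.
move: (minpt w h sigma) (minpt w h tau) => x y Px mx Py my kx ky.
pose A := [set i | dotp (w i) x == h i].
have xA : hyp_cap w h A x by move=> i; rewrite inE => /eqP.
have su := surj hgen xA.
have flipP g : dotp (w g) x = h g -> Pc w h (flip sigma g) x.
  move=> e i; rewrite in_flip; case: eqP => [->|_]; last exact: Px i.
  by rewrite e; case: (g \in sigma) => /=; exact: lexx.
have flipC g : dotp (w g) x = h g -> flip sigma g \in code w h.
  move=> e; have [u Hu] := su (fun i => if i \in flip sigma g then 1 else -1).
  rewrite inE; apply/asboolP; apply: (realize (u := u) (flipP g e)) => i ei.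
  rewrite Hu ?inE ?ei ?eqxx //.
  by case: (i \in flip sigma g) => /=; lra.
have flipK g : dotp (w g) x = h g -> kap w h (flip sigma g) <= dotp x x.
  by move=> e; exact: kap_le (flipP g e).
case: (eqVneq x y) => [exy | nxy].
  subst y.
  have ke : kap w h tau = kap w h sigma by rewrite kx ky.
  have Nlt : (Nk tau < Nk sigma)%N by move: lt; rewrite /ltk ke ltxx eqxx.
  have [g gs gt] : exists2 g, g \in sigma & g \notin tau.
    case: (boolP (sigma \subset tau)) => [st|/subsetPn [g gs gt]]; last by exists g.
    have := Nk_card Nlt => ct.
    have /eqP E : sigma == tau by rewrite eqEcard st ct.
    by move: Nlt; rewrite E ltnn.
  have e : dotp (w g) x = h g.
    apply/le_anti/andP; split; [have := Py g | have := Px g]; by rewrite ?gs ?(negbTE gt).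
  exists g; split; first by rewrite gs gt.
  split; first exact: flipC.
  have k1 := flipK g e.
  have cl : (#|flip sigma g| < #|sigma|)%N.
    by rewrite /flip gs (cardsD1 g sigma) gs.
  rewrite /ltk; move: k1; rewrite le_eqVlt -kx => /orP [/eqP ->|-> //].
  by rewrite eqxx ltxx /= Nk_lt.
have kle : dotp y y <= dotp x x.
  by move: lt; rewrite /ltk -kx -ky => /orP [/ltW //|/andP [/eqP -> _]].
pose v := y - x.
have yv : y = x + 1 *: v by rewrite scale1r /v addrC subrK.
have vv : 0 < dotp v v by apply: dotp_gt0; rewrite /v subr_eq0 eq_sym.
have xv : dotp x v < 0.
  move: kle; rewrite yv dotp_xtu !mul1r => H; lra.
have /choice [e He] : forall g, exists u, forall i, i \in A -> dotp (w i) u = (i == g)%:R.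
  by move=> g; exact: su.
have tang u : (forall i, dotp (w i) x = h i ->
    if i \in sigma then 0 <= dotp (w i) u else dotp (w i) u <= 0) -> 0 <= dotp x u.
  move=> Hu; rewrite leNgt; apply/negP => neg.
  have [z [Pz zz]] := descent Px Hu neg.
  by have := mx z Pz; lra.
pose v0 := v - \sum_(g in A) dotp (w g) v *: e g.
have wv0 i : i \in A -> dotp (w i) v0 = 0.
  move=> iA; rewrite dotpBr dotp_sumr (bigD1 i) //= dotpZr He // eqxx mulr1.
  rewrite big1 ?addr0 ?subrr // => j /andP [jA ji].
  by rewrite dotpZr He // eq_sym (negbTE ji) mulr0.
have actA i : dotp (w i) x = h i -> i \in A by move=> ei; rewrite inE ei eqxx.
have xv0 : dotp x v0 = 0.
  apply/le_anti/andP; split.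
    have := tang (- v0); rewrite dotpNr oppr_ge0; apply => i ei.
    by rewrite dotpNr wv0 ?actA // oppr0; case: (i \in sigma).
  apply: tang => i ei; by rewrite wv0 ?actA //; case: (i \in sigma).
have xvE : dotp x v = \sum_(g in A) dotp (w g) v * dotp x (e g).
  have E : v = v0 + \sum_(g in A) dotp (w g) v *: e g by rewrite /v0 subrK.
  rewrite {1}E dotpDr xv0 add0r dotp_sumr; apply: eq_bigr => g _.
  by rewrite dotpZr.
have [g gA gneg] : exists2 g, g \in A & dotp (w g) v * dotp x (e g) < 0.
  have : ~~ [forall g in A, 0 <= dotp (w g) v * dotp x (e g)].
    apply/negP => /forall_inP H.
    have : 0 <= dotp x v by rewrite xvE sumr_ge0.
    by rewrite leNgt xv.
  by case/forall_inPn => g gA; rewrite -ltNge => neg; exists g.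
have ge : dotp (w g) x = h g by move: gA; rewrite inE => /eqP.
have weg i : dotp (w i) x = h i -> dotp (w i) (e g) = (i == g)%:R.
  by move=> ei; apply: He; rewrite inE ei eqxx.
have wgy : dotp (w g) y = h g + dotp (w g) v by rewrite yv wxtu mul1r ge.
exists g; case: (boolP (g \in sigma)) => gs.
  have pe : 0 <= dotp x (e g).
    apply: tang => i ei; rewrite weg //.
    by case: (eqVneq i g) => [->|_]; rewrite ?gs ?ler0n //; case: (i \in sigma).
  have [p0 q0] : 0 < dotp x (e g) /\ dotp (w g) v < 0.
    move: gneg pe; move: (dotp x (e g)) (dotp (w g) v) => p q H1 H2.
    have p0 : 0 < p by rewrite lt_def H2 andbT; apply: contraTneq H1 => ->; rewrite mulr0 ltxx.
    by split => //; move: H1; rewrite pmulr_llt0.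
  have gt : g \notin tau.
    by apply/negP => gt; have := Py g; rewrite gt wgy; lra.
  split; first by rewrite ?gs (negbTE gt).
  split; first exact: flipC.
  have [z [Pz zz]] : exists z, Pc w h (flip sigma g) z /\ dotp z z < dotp x x.
    apply: (descent (u := - e g) (flipP g ge)); last by rewrite dotpNr oppr_lt0.
    move=> i ei; rewrite dotpNr weg // in_flip.
    case: (eqVneq i g) => [E|_] /=; last by rewrite ?mulr0n ?oppr0; case: (i \in sigma).
    by subst i; rewrite gs /= mulr1n oppr_le0 ler01.
  by apply/orP; left; rewrite kx; exact: le_lt_trans (kap_le Pz) zz.
have pe : dotp x (e g) <= 0.
  have := tang (- e g); rewrite dotpNr oppr_ge0; apply => i ei; rewrite dotpNr weg //.
  case: (eqVneq i g) => [E|_] /=; last by rewrite ?mulr0n ?oppr0; case: (i \in sigma).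
  by subst i; rewrite (negbTE gs) /= mulr1n oppr_le0 ler01.
have [p0 q0] : dotp x (e g) < 0 /\ 0 < dotp (w g) v.
  move: gneg pe; move: (dotp x (e g)) (dotp (w g) v) => p q H1 H2.
  have p0 : p < 0 by rewrite lt_def H2 andbT; apply: contraTneq H1 => <-; rewrite mulr0 ltxx.
  by split => //; move: H1; rewrite nmulr_llt0.
have gt : g \in tau.
  case: (boolP (g \in tau)) => // gt; have := Py g; rewrite (negbTE gt) wgy; lra.
split; first by rewrite ?gs gt.
split; first exact: flipC.
have [z [Pz zz]] : exists z, Pc w h (flip sigma g) z /\ dotp z z < dotp x x.
  apply: (descent (u := e g) (flipP g ge)) => // i ei.
  rewrite weg // in_flip.
  case: (eqVneq i g) => [E|_] /=; last by rewrite ?mulr0n; case: (i \in sigma).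
  by subst i; rewrite gs /= mulr1n ler01.
by apply/orP; left; rewrite kx; exact: le_lt_trans (kap_le Pz) zz.
Qed.
End Key.

Section Final.
Variable R : realType.
Variables d n : nat.
Variables (w : 'I_n -> 'rV[R]_d) (h : 'I_n -> R).

Notation ltkk := (ltk w h).

Lemma Nk_inj (a b : {set 'I_n}) : Nk a = Nk b -> a = b.
Proof.
move=> E.
have ca : #|a| = #|b|.
  apply/eqP; rewrite eqn_leq.
  have : (enum_rank a < #|{set 'I_n}|)%N := ltn_ord (enum_rank a).
  have : (enum_rank b < #|{set 'I_n}|)%N := ltn_ord (enum_rank b).
  move: E; rewrite /Nk.
  move: (nat_of_ord (enum_rank a)) (nat_of_ord (enum_rank b)) => ra rb E hb ha.
  apply/andP; split; rewrite leqNgt; apply/negP => lt.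
    have : (#|b|.+1 * #|{set 'I_n}| <= #|a| * #|{set 'I_n}|)%N by rewrite leq_mul2r lt orbT.
    rewrite mulSn; move: E; move: (#|b| * _)%N (#|a| * _)%N => x y; lia.
  have : (#|a|.+1 * #|{set 'I_n}| <= #|b| * #|{set 'I_n}|)%N by rewrite leq_mul2r lt orbT.
  rewrite mulSn; move: E; move: (#|b| * _)%N (#|a| * _)%N => x y; lia.
move: E; rewrite /Nk ca => /eqP; rewrite eqn_add2l => /eqP E.
by apply: enum_rank_inj; apply: val_inj.
Qed.

Lemma ltk_irr a : ltkk a a = false.
Proof. by rewrite /ltk ltxx eqxx ltnn. Qed.

Lemma ltk_trans a b c : ltkk a b -> ltkk b c -> ltkk a c.
Proof.
rewrite /ltk => /orP [H1|/andP [/eqP E1 N1]] /orP [H2|/andP [/eqP E2 N2]].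
- by rewrite (lt_trans H1 H2).
- by rewrite -E2 H1.
- by rewrite E1 H2.
- by rewrite E1 E2 eqxx (ltn_trans N1 N2) orbT.
Qed.

Lemma ltk_total a b : a != b -> ltkk a b || ltkk b a.
Proof.
move=> ab; rewrite /ltk.
case: (ltgtP (kap w h a) (kap w h b)) => //= E.
rewrite ?E ?eqxx /=.
case: (ltngtP (Nk a) (Nk b)) => // /Nk_inj E'.
by rewrite E' eqxx in ab.
Qed.

Definition lek a b := ~~ ltkk b a.

Lemma lek_total : total lek.
Proof.
move=> a b; rewrite /lek -negb_and; apply/negP => /andP [H1 H2].
by have := ltk_trans H1 H2; rewrite ltk_irr.
Qed.

Lemma lek_trans : transitive lek.
Proof.
move=> b a c; rewrite /lek => H1 H2; apply/negP => H3.
case: (eqVneq a b) => [E|ne]; first by subst b; rewrite H3 in H2.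
have := ltk_total ne; rewrite (negbTE H1) orbF => ab.
by move: H2; rewrite (ltk_trans H3 ab).
Qed.

Theorem main (hgen : generic_intersections w h) : shellable (polar_complex (code w h)).
Proof.
set C := code w h.
pose s := sort lek (enum C).
have us : uniq s by rewrite sort_uniq enum_uniq.
have sC : s =i C by move=> x; rewrite mem_sort mem_enum.
have ss : sorted lek s by apply: sort_sorted; exact: lek_total.
have s0 : s != [::].
  pose sg := [set i | 0 < dotp (w i) 0 - h i].
  have : sg \in C by rewrite inE; apply/asboolP; exists 0 => i; rewrite inE.
  by rewrite -sC; case: (s).
apply: (shell_comb us sC s0) => i ilt tau tt.
set si := nth set0 s i.
have lt_si k : (k < size s)%N -> ltkk (nth set0 s k) si -> (k < i)%N.
  move=> ks lk; rewrite ltnNge; apply/negP => ik.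
  case: (ltngtP i k) ik => // [ik|ik] _.
    have := sorted_ltn_nth lek_trans set0 ss => /(_ i k ilt ks ik).
    by rewrite /lek lk.
  by move: lk; rewrite /si ik ltk_irr.
have tC : tau \in C by rewrite -sC (mem_take tt).
have [j jlt tj] : exists2 j, (j < i)%N & nth set0 s j = tau.
  exists (index tau s); last by rewrite nth_index // sC.
  rewrite -(cat_take_drop i s) index_cat tt.
  by rewrite -{2}(size_takel (ltnW ilt)) index_mem.
have siC : si \in C by rewrite -sC mem_nth.
have lt : ltkk tau si.
  have js : (j < size s)%N by apply: ltn_trans ilt.
  have := sorted_ltn_nth lek_trans set0 ss => /(_ j i js ilt jlt).
  rewrite tj /lek => H.
  have ne : tau != si.
    apply/eqP => E; move: (nth_uniq set0 js ilt us); rewrite tj -/si E eqxx => /esym /eqP.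
    by move=> ji; rewrite ji ltnn in jlt.
  by have := ltk_total ne; rewrite (negbTE H) orbF.
have [g [gd [fC flt]]] := key hgen siC tC lt.
exists g; split => //.
have fs : flip si g \in s by rewrite sC.
have ks : (index (flip si g) s < size s)%N by rewrite index_mem.
have := lt_si _ ks; rewrite nth_index // => /(_ flt) ki.
rewrite -(nth_index set0 fs) -(nth_take set0 ki).
by apply: mem_nth; rewrite size_takel // ltnW.
Qed.
End Final.

Theorem lemma7p2 (R : realType) (d n : nat)
  (w : 'I_n -> 'rV[R]_d) (h : 'I_n -> R)
  (hw : forall i, w i != 0%R)
  (hgen : generic_intersections w h) :
  shellable (polar_complex (code w h)).
Proof. exact: main hgen. Qed.
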